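(* Let $M$ be an entrywise nonnegative $m\times n$ real matrix and let $M=AW$ be a stable nonnegative matrix factorization with $A\in\mathbb{R}_{\ge0}^{m\times r}$, $W\in\mathbb{R}_{\ge0}^{r\times n}$. Let $s=\mathrm{rank}(A)$, $t=\mathrm{rank}(W)$, let $U\subseteq[m]$ be a set of $s$ linearly independent rows of $A$ and $V\subseteq[n]$ a set of $t$ linearly independent columns of $W$, and let $B_1,\dots,B_p$ be the ensemble of $A$ at $U$ and $C_1,\dots,C_q$ the ensemble of $W$ at $V$. Then the test $\mathbb P$ outputs PASS on these $B_1,\dots,B_p$ and $C_1,\dots,C_q$.
   Context: Notation: $M_i$ is the $i$-th column, $M^j$ the $j$-th row; $A_S$ = columns in $S$, $A^U$ = rows in $U$; $M_i^U$ the entries of $M_i$ in rows $U$, $M^j_V$ the entries of $M^j$ in columns $V$. $\mathrm{aff}(A)=\{\sum_k\alpha_kA_k:\alpha_k\ge0\}$. A subset $S\subseteq[r]$ of columns of $A$ is admissible for $v\in\mathbb{R}^m$ if $v\in\mathrm{aff}(A_S)$; a subset $T\subseteq[r]$ of rows of $W$ is admissible for a row vector $u$ if $u$ is a nonnegative combination of the rows of $W^T$. Support = set of indices of nonzero entries. Lexicographic ordering on subsets of $[r]$: if $|S|<|T|$ then $S$ precedes $T$; equal-size subsets compared by standard lexicographic order. $M=AW$ is stable if, with $S_i$ the lexicographically first subset of columns of $A$ admissible for $M_i$ and $T_j$ the lexicographically first subset of rows of $W$ admissible for $M^j$, each $W_i$ is supported in $S_i$ and each row $A^j$ is supported in $T_j$.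 Ensemble of $A$ at $U$: with $S_1,\dots,S_p$ all sets of $s$ linearly independent columns of $A$ in lexicographic order, $B_k$ is the $r\times s$ matrix zero on rows outside $S_k$ whose restriction to rows $S_k$ is $(A^U_{S_k})^{-1}$. Ensemble of $W$ at $V$: with $T_1,\dots,T_q$ all sets of $t$ linearly independent rows of $W$ in lexicographic order, $C_k$ is the $t\times r$ matrix zero on columns outside $T_k$ whose restriction to columns $T_k$ is $(W^{T_k}_V)^{-1}$. For a finite collection $\mathcal S$ of vectors, $\mathrm{first}(\mathcal S)$ is the vector with lexicographically minimal support among the entrywise nonnegative vectors in $\mathcal S$, and is FAIL if there is none or if two or more distinct nonnegative vectors tie for the earliest support. Test $\mathbb P$: set $\hat W_i=\mathrm{first}(\{B_1M_i^U,\dots,B_pM_i^U\})$ and $\hat A^j=\mathrm{first}(\{M^j_VC_1,\dots,M^j_VC_q\})$; PASS iff none is FAIL and $\hat A^j\hat W_i=M^j_i$ for all $i,j$. *)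

(* Defs.v *)
From HB Require Import structures.
From mathcomp Require Import all_boot all_order all_algebra.
Set Implicit Arguments. Unset Strict Implicit. Unset Printing Implicit Defensive.
Import Order.TTheory GRing.Theory Num.Theory.
Local Open Scope ring_scope.

Fixpoint lexlt_seq (s t : seq nat) : bool :=
  match s, t with
  | x :: s', y :: t' => (x < y)%N || ((x == y) && lexlt_seq s' t')
  | _, _ => false
  end.

Definition setlt (r : nat) (S T : {set 'I_r}) : bool :=
  (#|S| < #|T|)%N ||
  ((#|S| == #|T|) && lexlt_seq (map val (enum S)) (map val (enum T))).

Definition setle (r : nat) (S T : {set 'I_r}) : bool := (S == T) || setlt S T.

Definition lexfirst (r : nat) (P : {set 'I_r} -> Prop) (S : {set 'I_r}) : Prop :=
  P S /\ forall T, P T -> T <> S -> setlt S T.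

Definition nonneg_mx (R : realFieldType) (m n : nat) (X : 'M[R]_(m, n)) : Prop :=
  forall i j, 0 <= X i j.

Definition admissible_col (R : realFieldType) (m r : nat) (A : 'M[R]_(m, r))
  (v : 'cV[R]_m) (S : {set 'I_r}) : Prop :=
  exists alpha : 'I_r -> R, (forall k, 0 <= alpha k) /\
    v = \sum_(k in S) alpha k *: col k A.

Definition admissible_row (R : realFieldType) (r n : nat) (W : 'M[R]_(r, n))
  (u : 'rV[R]_n) (T : {set 'I_r}) : Prop :=
  exists beta : 'I_r -> R, (forall k, 0 <= beta k) /\
    u = \sum_(k in T) beta k *: row k W.

Definition stable (R : realFieldType) (m r n : nat) (A : 'M[R]_(m, r))
  (W : 'M[R]_(r, n)) : Prop :=
  (forall (i : 'I_n) (S : {set 'I_r}),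
     lexfirst (admissible_col A (col i (A *m W))) S ->
     forall k, W k i != 0 -> k \in S) /\
  (forall (j : 'I_m) (T : {set 'I_r}),
     lexfirst (admissible_row W (row j (A *m W))) T ->
     forall k, A j k != 0 -> k \in T).

Definition sel (T : finType) (X : {set T}) (k : nat) (h : #|X| = k) (i : 'I_k) : T :=
  enum_val (cast_ord (esym h) i).

Definition rows_of (R : realFieldType) (m r : nat) (A : 'M[R]_(m, r)) (U : {set 'I_m})
  : 'M[R]_(#|U|, r) := \matrix_(i, j) A (enum_val i) j.

Definition cols_of (R : realFieldType) (m r : nat) (A : 'M[R]_(m, r)) (S : {set 'I_r})
  : 'M[R]_(m, #|S|) := \matrix_(i, j) A i (enum_val j).

Definition cset (r s : nat) := {S : {set 'I_r} | #|S| == s}.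

Definition cset_card (r s : nat) (S : cset r s) : #|val S| = s := eqP (valP S).

(* B_k for the set S_k: r x s, zero outside rows S_k, rows S_k = (A^U_{S_k})^{-1} *)
Definition ensB (R : realFieldType) (m r : nat) (A : 'M[R]_(m, r)) (U : {set 'I_m})
  (s : nat) (hU : #|U| = s) (S : cset r s) : 'M[R]_(r, s) :=
  let AUS : 'M[R]_s := \matrix_(i, j) A (sel hU i) (sel (cset_card S) j) in
  \matrix_(a, b) \sum_(j < s) (a == sel (cset_card S) j)%:R * (invmx AUS) j b.

Definition ensemble_A (R : realFieldType) (m r : nat) (A : 'M[R]_(m, r))
  (U : {set 'I_m}) (s : nat) (hU : #|U| = s) : seq 'M[R]_(r, s) :=
  [seq ensB A hU X | X <- sort (fun X Y : cset r s => setle (val X) (val Y))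
                              (enum [pred X : cset r s |
                                       \rank (cols_of A (val X)) == s])].

(* C_k for the set T_k: t x r, zero outside columns T_k, columns T_k = (W^{T_k}_V)^{-1} *)
Definition ensC (R : realFieldType) (r n : nat) (W : 'M[R]_(r, n)) (V : {set 'I_n})
  (t : nat) (hV : #|V| = t) (T : cset r t) : 'M[R]_(t, r) :=
  let WTV : 'M[R]_t := \matrix_(i, j) W (sel (cset_card T) i) (sel hV j) in
  \matrix_(a, b) \sum_(j < t) (invmx WTV) a j * (b == sel (cset_card T) j)%:R.

Definition ensemble_W (R : realFieldType) (r n : nat) (W : 'M[R]_(r, n))
  (V : {set 'I_n}) (t : nat) (hV : #|V| = t) : seq 'M[R]_(t, r) :=
  [seq ensC W hV X | X <- sort (fun X Y : cset r t => setle (val X) (val Y))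
                              (enum [pred X : cset r t |
                                       \rank (rows_of W (val X)) == t])].

Definition supp (R : realFieldType) (r : nat) (x : 'rV[R]_r) : {set 'I_r} :=
  [set k | x 0 k != 0].

(* None = FAIL *)
Definition first (R : realFieldType) (r : nat) (L : seq 'rV[R]_r) : option 'rV[R]_r :=
  let N := [seq x <- L | [forall k, 0 <= (x : 'rV[R]_r) 0 k]] in
  let C := [seq x <- N | all (fun y : 'rV[R]_r => ~~ setlt (supp y) (supp x)) N] in
  match C with
  | [::] => None
  | x :: C' => if all (fun y => y == x) C' then Some x else None
  end.

Definition testP (R : realFieldType) (m n r : nat) (M : 'M[R]_(m, n))
  (U : {set 'I_m}) (V : {set 'I_n}) (s t : nat) (hU : #|U| = s) (hV : #|V| = t)
  (Bs : seq 'M[R]_(r, s)) (Cs : seq 'M[R]_(t, r)) : Prop :=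
  let MU (i : 'I_n) : 'cV[R]_s := \col_k M (sel hU k) i in
  let MV (j : 'I_m) : 'rV[R]_t := \row_k M j (sel hV k) in
  (* hat W_i, stored as a row vector (transpose of B_k M_i^U) *)
  let What (i : 'I_n) := first [seq (B *m MU i)^T | B <- Bs] in
  let Ahat (j : 'I_m) := first [seq MV j *m C | C <- Cs] in
  (forall i, What i != None) /\ (forall j, Ahat j != None) /\
  (forall i j w a, What i = Some w -> Ahat j = Some a ->
     \sum_(k < r) a 0 k * w 0 k = M j i).

(* Main.v *)
Require Import Defs.
From HB Require Import structures.
From mathcomp Require Import all_boot all_order all_algebra.
From Stdlib Require Import Classical.
Import Order.TTheory GRing.Theory Num.Theory.
Local Open Scope ring_scope.
Set Implicit Arguments. Unset Strict Implicit. Unset Printing Implicit Defensive.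

Lemma lexlt_irr s : lexlt_seq s s = false.
Proof. by elim: s => //= x s ->; rewrite ltnn eqxx. Qed.

Lemma lexlt_trans s t u : lexlt_seq s t -> lexlt_seq t u -> lexlt_seq s u.
Proof.
elim: s t u => [|x s IH] [|y t] [|z u] //=.
case/orP=> [xy|/andP[/eqP-> st]]; case/orP=> [yz|/andP[/eqP<- tu]].
- by rewrite (ltn_trans xy yz).
- by rewrite xy.
- by rewrite yz.
- by rewrite eqxx (IH _ _ st tu) orbT.
Qed.

Lemma lexlt_total s t : size s = size t -> s != t -> lexlt_seq s t || lexlt_seq t s.
Proof.
elim: s t => [|x s IH] [|y t] //=.
case=> hs.
case: (ltngtP x y) => [_ _|_ _|e]; rewrite ?orbT //.
rewrite e /= => ne; apply: IH => //.
by apply: contra ne => /eqP ->.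
Qed.

Lemma setlt_irr r (S : {set 'I_r}) : setlt S S = false.
Proof. by rewrite /setlt ltnn eqxx lexlt_irr. Qed.

Lemma setlt_trans r (S T X : {set 'I_r}) : setlt S T -> setlt T X -> setlt S X.
Proof.
rewrite /setlt; case/orP=> [h1|/andP[/eqP e1 l1]]; case/orP=> [h2|/andP[/eqP e2 l2]].
- by rewrite (ltn_trans h1 h2).
- by rewrite -e2 h1.
- by rewrite e1 h2.
- by rewrite e1 e2 eqxx (lexlt_trans l1 l2) orbT.
Qed.

Lemma setlt_asym r (S T : {set 'I_r}) : setlt S T -> setlt T S -> False.
Proof. by move=> h1 h2; have := setlt_trans h1 h2; rewrite setlt_irr. Qed.

Lemma setlt_total r (S T : {set 'I_r}) : S != T -> setlt S T || setlt T S.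
Proof.
move=> ne; rewrite /setlt; case: (ltngtP #|S| #|T|) => [h|h|e]; rewrite ?orbT //=. apply: lexlt_total; first by rewrite !size_map -!cardE e.
apply: contra ne => /eqP /(inj_map val_inj) E.
apply/eqP/setP => x; by rewrite -[x \in S]mem_enum -[x \in T]mem_enum E.
Qed.

Lemma exists_lexfirst r (P : {set 'I_r} -> Prop) S1 : P S1 -> exists S, lexfirst P S.
Proof.
pose c (S : {set 'I_r}) := #|[set T | setlt T S]|.
suff H : forall k S, (c S < k)%N -> P S -> exists S', lexfirst P S'.
  by apply: (H (c S1).+1).
elim=> [//|k IH] S hk PS.
case: (classic (exists T, P T /\ setlt T S)) => [[T [PT lt]]|nex].
- apply: (IH T) => //; rewrite -ltnS; apply: leq_trans hk; rewrite ltnS.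
  apply: proper_card; apply/properP; split.
    by apply/subsetP=> X; rewrite !inE => h; apply: setlt_trans h lt.
  by exists T; rewrite !inE ?lt ?setlt_irr.
- exists S; split=> // T PT ne.
  have /orP[h|//] := setlt_total (introN eqP ne).
  by exfalso; apply: nex; exists T; split.
Qed.

Section LA.
Variable R : realFieldType.

Lemma sum_ind (T : finType) (f : T -> R) (b : T) :
  \sum_a f a * (a == b)%:R = f b.
Proof.
rewrite (bigD1 b) //= eqxx mulr1 big1 ?addr0 // => a /negbTE ->.
by rewrite mulr0.
Qed.

Lemma mul_col_sum m r (A : 'M[R]_(m, r)) (y : 'cV[R]_r) :
  A *m y = \sum_k y k 0 *: col k A.
Proof.
apply/matrixP=> p q; rewrite ord1 !mxE summxE.
by apply: eq_bigr => k _; rewrite !mxE mulrC.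
Qed.

Lemma adm_of_vec m r (A : 'M[R]_(m, r)) (y : 'cV[R]_r) v :
  (forall k, 0 <= y k 0) -> A *m y = v ->
  admissible_col A v [set k | y k 0 != 0].
Proof.
move=> y0 <-; exists (fun k => y k 0); split => //.
rewrite mul_col_sum (bigID (fun k => k \in [set k | y k 0 != 0])) /=.
rewrite [X in _ + X]big1 ?addr0 // => k; rewrite inE negbK => /eqP ->.
by rewrite scale0r.
Qed.

Lemma vec_of_adm m r (A : 'M[R]_(m, r)) v T :
  admissible_col A v T ->
  exists y : 'cV[R]_r, (forall k, 0 <= y k 0) /\
    (forall k, k \notin T -> y k 0 = 0) /\ A *m y = v.
Proof.
case=> al [al0 ->]; exists (\col_k (if k \in T then al k else 0)).
split; first by move=> k; rewrite mxE; case: ifP.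
split; first by move=> k kT; rewrite mxE (negbTE kT).
rewrite mul_col_sum (bigID (mem T)) /= [X in _ + X]big1 ?addr0.
  by apply: eq_bigr => k kT; rewrite mxE kT.
by move=> k /negbTE kT; rewrite mxE kT scale0r.
Qed.

Lemma indep_inj m r (A : 'M[R]_(m, r)) (S : {set 'I_r}) :
  \rank (cols_of A S) = #|S| ->
  forall y : 'cV[R]_r, (forall a, a \notin S -> y a 0 = 0) -> A *m y = 0 -> y = 0.
Proof.
move=> rk y yS Ay.
pose z : 'cV[R]_#|S| := \col_j y (enum_val j) 0.
have Cz : cols_of A S *m z = A *m y.
  apply/matrixP=> p q; rewrite ord1 !mxE (bigID (mem S)) /=.
  rewrite [X in _ = _ + X]big1 ?addr0; last first.
    by move=> a aS; rewrite yS ?mulr0.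
  rewrite [RHS]big_enum_val /=; apply: eq_bigr => j _; by rewrite !mxE.
have rf : row_free (cols_of A S)^T by rewrite /row_free mxrank_tr rk.
have z0 : z^T = 0.
  apply: (row_free_inj rf); rewrite mul0mx -trmx_mul Cz Ay; exact: trmx0.
apply/matrixP=> a q; rewrite ord1 mxE.
case: (boolP (a \in S)) => aS; last by rewrite yS.
have := congr1 (fun M : 'rV[R]_#|S| => M 0 (enum_rank_in aS a)) z0.
by rewrite !mxE enum_rankK_in.
Qed.


Lemma rows_span m r (A : 'M[R]_(m, r)) (U : {set 'I_m}) :
  \rank (rows_of A U) = \rank A -> exists D : 'M[R]_(m, #|U|), A = D *m rows_of A U.
Proof.
move=> rk.
have sub : (rows_of A U <= A)%MS.
  apply/row_subP=> k; have -> : row k (rows_of A U) = row (enum_val k) A.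
    by apply/rowP=> j; rewrite !mxE.
  exact: row_sub.
have : (A <= rows_of A U)%MS by rewrite -(mxrank_leqif_sup sub).2 rk.
by move/submxP=> [D hD]; exists D.
Qed.

Lemma lexfirst_sub r (P : {set 'I_r} -> Prop) S0 T :
  lexfirst P S0 -> P T -> T \subset S0 -> T = S0.
Proof.
case=> _ h PT sub; apply/eqP; apply: contraT => ne.
have neq : T <> S0 by move=> e; move: ne; rewrite e eqxx.
have := h T PT neq.
rewrite /setlt; have := subset_leqif_cards sub.
case=> le eqc; case/orP.
  by rewrite ltnNge le.
by case/andP=> /eqP e _; move: ne; rewrite -eqc e eqxx.
Qed.

Lemma lexfirst_pos m r (A : 'M[R]_(m, r)) v S0 :
  lexfirst (admissible_col A v) S0 ->
  forall y : 'cV[R]_r, (forall k, 0 <= y k 0) -> (forall k, k \notin S0 -> y k 0 = 0) ->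
  A *m y = v -> forall k, k \in S0 -> y k 0 != 0.
Proof.
move=> lf y y0 yS Ay k kS; apply/negP=> /eqP yk.
have := lexfirst_sub lf (adm_of_vec y0 Ay).
have sub : [set k | y k 0 != 0] \subset S0.
  by apply/subsetP=> a; rewrite inE; apply: contraR => /yS ->; rewrite eqxx.
move=> /(_ sub) /setP /(_ k); by rewrite inE yk eqxx kS.
Qed.


Lemma caratheodory m r (A : 'M[R]_(m, r)) v S0 :
  lexfirst (admissible_col A v) S0 -> \rank (cols_of A S0) = #|S0|.
Proof.
move=> lf; have [y [y0 [yS Ay]]] := vec_of_adm lf.1.
have ypos := lexfirst_pos lf y0 yS Ay.
set C := cols_of A S0.
apply/eqP; rewrite eqn_leq rank_leq_col /=; apply: contraT; rewrite -ltnNge => lt.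
have [z [z0 nz]] : exists z : 'rV[R]_#|S0|, z *m C^T = 0 /\ z != 0.
  apply: NNPP => nex.
  have : row_free C^T.
    apply: inj_row_free => z hz; apply/eqP; apply: contraT => nz.
    by exfalso; apply: nex; exists z.
  by rewrite /row_free mxrank_tr (ltn_eqF lt).
pose g0 : 'cV[R]_r := \col_a \sum_j z 0 j * (a == enum_val j)%:R.
have g0S : forall a, a \notin S0 -> g0 a 0 = 0.
  move=> a aS; rewrite mxE big1 // => j _.
  have -> : (a == enum_val j) = false.
    by apply/negbTE; apply: contra aS => /eqP ->; exact: enum_valP.
  by rewrite mulr0.
have Ag0 : A *m g0 = 0.
  have -> : A *m g0 = C *m z^T.
    apply/matrixP=> p q; rewrite ord1 !mxE.
    under eq_bigr do rewrite mxE big_distrr /=.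
    rewrite exchange_big /=; apply: eq_bigr => j _.
    rewrite !mxE; under eq_bigr do rewrite mulrCA.
    by rewrite -big_distrr /= sum_ind mulrC.
  by apply: trmx_inj; rewrite trmx_mul trmxK z0 trmx0.
have [k gk] : exists k, g0 k 0 != 0.
  apply: NNPP => nex; move/eqP: nz; apply; apply/matrixP=> p j.
  rewrite ord1 mxE; case: (eqVneq (z 0 j) 0) => // nzj; exfalso; apply: nex.
  exists (enum_val j); rewrite mxE.
  rewrite (bigD1 j) //= eqxx mulr1 big1 ?addr0 // => j' /negbTE ne.
  by rewrite (inj_eq enum_val_inj) eq_sym ne mulr0.
have [g [gS [Ag [k' gk']]]] : exists g : 'cV[R]_r, (forall a, a \notin S0 -> g a 0 = 0)
    /\ A *m g = 0 /\ exists k, 0 < g k 0.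
  case: (ltrgtP 0 (g0 k 0)) => h.
  - by exists g0; split => //; split => //; exists k.
  - exists (- g0); split; first by move=> a aS; rewrite mxE g0S ?oppr0.
    split; first by rewrite mulmxN Ag0 oppr0.
    by exists k; rewrite mxE oppr_gt0.
  - by move: gk; rewrite -h eqxx.
case: (@arg_minP _ _ _ k' (fun j => 0 < g j 0) (fun j => y j 0 / g j 0) gk') => ks gks hmin.
pose t := y ks 0 / g ks 0.
have t0 : 0 <= t by rewrite divr_ge0 // ltW.
pose y' := y - t *: g.
have y'E : forall a, y' a 0 = y a 0 - t * g a 0 by move=> a; rewrite !mxE.
have ksS : ks \in S0 by apply: contraT => /gS h; move: gks; rewrite h ltxx.
have : y' ks 0 != 0.
  apply: (lexfirst_pos lf) => //.
  - move=> a; rewrite y'E subr_ge0; case: (ltrP 0 (g a 0)) => ga.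
      by rewrite -ler_pdivlMr //; apply: hmin.
    by apply: le_trans (y0 a); apply: mulr_ge0_le0.
  - by move=> a aS; rewrite y'E yS // gS // mulr0 subrr.
  - by rewrite mulmxBr -scalemxAr Ag scaler0 subr0.
by rewrite y'E /t divfK ?subrr ?eqxx // gt_eqF.
Qed.


Section Ext.
Variables (m r : nat) (A : 'M[R]_(m, r)).
Let Ct (S : {set 'I_r}) := (cols_of A S)^T.

Lemma row_Ct (S : {set 'I_r}) j : row j (Ct S) = (col (enum_val j) A)^T.
Proof. by apply/rowP=> a; rewrite !mxE. Qed.

Lemma Ct_sub (S : {set 'I_r}) k1 (B : 'M[R]_(k1, m)) :
  (forall k, k \in S -> ((col k A)^T <= B)%MS) -> (Ct S <= B)%MS.
Proof. move=> h; apply/row_subP=> j; rewrite row_Ct; apply: h; exact: enum_valP. Qed.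

Lemma col_in (S : {set 'I_r}) k : k \in S -> ((col k A)^T <= Ct S)%MS.
Proof.
move=> kS; have := row_sub (enum_rank_in kS k) (Ct S).
by rewrite row_Ct enum_rankK_in.
Qed.

Lemma rank_cols_le (S : {set 'I_r}) : (\rank (cols_of A S) <= \rank A)%N.
Proof.
rewrite -mxrank_tr -[\rank A]mxrank_tr; apply: mxrankS; apply: Ct_sub => k _.
rewrite tr_col; exact: row_sub.
Qed.

Lemma add_indep (S : {set 'I_r}) k : \rank (cols_of A S) = #|S| -> k \notin S ->
  ~~ ((col k A)^T <= Ct S)%MS -> \rank (cols_of A (k |: S)) = #|k |: S|.
Proof.
move=> rk kS nsub; set u := (col k A)^T.
have u0 : u != 0 by apply/eqP => e; move: nsub; rewrite -/u e sub0mx.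
have cap0 : (u :&: Ct S)%MS = 0.
  apply/eqP; rewrite -mxrank_eq0; apply: contraT => nz.
  have le1 : (\rank u <= 1)%N by rewrite rank_rV; case: (u != 0).
  have := mxrank_leqif_sup (capmxSl u (Ct S)); case=> le eqr.
  have e : \rank (u :&: Ct S)%MS == \rank u.
    by rewrite eqn_leq le /=; apply: leq_trans le1 _; rewrite lt0n.
  rewrite eqr in e; case/negP: nsub; exact: submx_trans e (capmxSr _ _).
have rsum : \rank (u + Ct S)%MS = #|S|.+1.
  by rewrite mxrank_disjoint_sum // rank_rV u0 mxrank_tr rk.
rewrite [RHS]cardsU1 kS add1n -rsum -mxrank_tr; apply/eqP; rewrite eqn_leq; apply/andP; split.
  apply: mxrankS; apply: Ct_sub => k' /setU1P [->|k'S]; first exact: addsmxSl.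
  exact: submx_trans (col_in k'S) (addsmxSr _ _).
apply: mxrankS; rewrite addsmx_sub; apply/andP; split; first exact: col_in (setU11 _ _).
by apply: Ct_sub => k' k'S; apply: col_in; rewrite setU1r.
Qed.

Lemma extend_indep (S : {set 'I_r}) : \rank (cols_of A S) = #|S| ->
  exists X : {set 'I_r}, S \subset X /\ #|X| = \rank A /\ \rank (cols_of A X) = #|X|.
Proof.
move: {2}(\rank A - #|S|)%N (erefl (\rank A - #|S|)%N) => d.
elim: d S => [|d IH] S hd rk.
  exists S; split => //; split => //; apply/eqP; rewrite eqn_leq -{1}rk rank_cols_le.
  by rewrite -subn_eq0 hd.
have lt : (#|S| < \rank A)%N by rewrite -subn_gt0 hd.
have [k nsub] : exists k, ~~ ((col k A)^T <= Ct S)%MS.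
  apply: NNPP => nex.
  have : (A^T <= Ct S)%MS.
    apply/row_subP=> k; rewrite -tr_col; apply: contraT => ns; exfalso; apply: nex.
    by exists k.
  move/mxrankS; rewrite mxrank_tr mxrank_tr rk => le.
  by move: lt; rewrite ltnNge le.
have kS : k \notin S by apply: contra nsub; exact: col_in.
have rk' := add_indep rk kS nsub.
have hd' : (\rank A - #|k |: S|)%N = d by rewrite cardsU1 kS subnS hd.
have [X [sub [cX rX]]] := IH _ hd' rk'.
exists X; split => //; apply: subset_trans sub; exact: subsetU1.
Qed.

End Ext.


Lemma first_eq r (L : seq 'rV[R]_r) z :
  z \in L -> (forall k, 0 <= z 0 k) ->
  (forall x, x \in L -> (forall k, 0 <= x 0 k) ->
     (supp x = supp z -> x = z) /\ (supp x != supp z -> setlt (supp z) (supp x))) ->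
  first L = Some z.
Proof.
move=> zL z0 h; rewrite /first.
set N := [seq x <- L | _].
have hN : forall x, x \in N -> (supp x = supp z -> x = z) /\
    (supp x != supp z -> setlt (supp z) (supp x)).
  by move=> x; rewrite mem_filter => /andP[/forallP x0 xL]; apply: h.
have zN : z \in N by rewrite mem_filter zL andbT; apply/forallP.
set C := [seq x <- N | _].
have Cz : forall x, x \in C -> x = z.
  move=> x; rewrite mem_filter => /andP[/allP al xN]; have [e lt] := hN x xN.
  case: (eqVneq (supp x) (supp z)) => [/e //|ne].
  by have := al z zN; rewrite (lt ne).
have zC : z \in C.
  rewrite mem_filter zN andbT; apply/allP=> y yN; have [e lt] := hN y yN.
  case: (eqVneq (supp y) (supp z)) => [->|ne]; first by rewrite setlt_irr.
  by apply/negP=> l; apply: setlt_asym (lt ne) l.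
clearbody C; case: C Cz zC => [//|x C'] Cz zC.
rewrite (Cz x (mem_head _ _)).
have -> : all (fun y => y == z) C'.
  by apply/allP => y yC; apply/eqP; apply: Cz; rewrite inE yC orbT.
by [].
Qed.

Lemma rank_sel m r (A : 'M[R]_(m, r)) (X : {set 'I_r}) k (h : #|X| = k) :
  \rank (\matrix_(p, j) A p (sel h j) : 'M[R]_(m, k)) = \rank (cols_of A X).
Proof.
subst k; congr mxrank; apply/matrixP=> p j; by rewrite !mxE /sel cast_ord_id.
Qed.

Lemma ensB_prop m r n (A : 'M[R]_(m, r)) (W : 'M[R]_(r, n)) (U : {set 'I_m}) s
  (hU : #|U| = s) (D : 'M[R]_(m, #|U|)) :
  A = D *m rows_of A U -> forall X : cset r s, \rank (cols_of A (val X)) == s ->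
  forall i, let x := ensB A hU X *m (\col_k (A *m W) (sel hU k) i) in
  (forall a, a \notin val X -> x a 0 = 0) /\ A *m x = A *m col i W.
Proof.
move=> hD X rX i x; subst s.
set hX := cset_card X.
have selE : forall k, sel (erefl #|U|) k = enum_val k by move=> k; rewrite /sel cast_ord_id.
pose P : 'M[R]_(r, #|U|) := \matrix_(a, j) (a == sel hX j)%:R.
pose AUS : 'M[R]_#|U| := \matrix_(i, j) A (sel (erefl #|U|) i) (sel hX j).
have eB : ensB A (erefl _) X = P *m invmx AUS.
  by apply/matrixP => a b; rewrite /ensB !mxE; apply: eq_bigr => j _; rewrite !mxE.
have eAUS : AUS = rows_of A U *m P.
  apply/matrixP=> p j; rewrite !mxE; under eq_bigr do rewrite !mxE.
  by rewrite sum_ind selE.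
have eCy : A *m P = D *m AUS by rewrite eAUS mulmxA -hD.
have rCy : \rank (A *m P) = #|U|.
  have -> : A *m P = \matrix_(p, j) A p (sel hX j).
    apply/matrixP=> p j; rewrite !mxE; under eq_bigr do rewrite !mxE.
    by rewrite sum_ind.
  by rewrite rank_sel; apply/eqP.
have uAUS : AUS \in unitmx.
  rewrite -row_free_unit /row_free eqn_leq rank_leq_row /= -{1}rCy eCy.
  exact: mxrankM_maxr.
have eMU : \col_k (A *m W) (sel (erefl #|U|) k) i = rows_of A U *m col i W.
  apply/matrixP=> k q; rewrite ord1 !mxE selE; apply: eq_bigr => a _; by rewrite !mxE.
rewrite /x eB; split.
  move=> a aX; rewrite -mulmxA mxE big1 // => j _; rewrite mxE.
  have -> : (a == sel hX j) = false.
    by apply/negbTE; apply: contra aX => /eqP ->; rewrite /sel; exact: enum_valP.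
  by rewrite mul0r.
by rewrite !mulmxA eCy -(mulmxA D) mulmxV // mulmx1 eMU mulmxA -hD.
Qed.


Lemma subE r (y1 y2 : 'cV[R]_r) a : (y1 - y2) a 0 = y1 a 0 - y2 a 0.
Proof. by rewrite !mxE. Qed.

Lemma col_case m r n (A : 'M[R]_(m, r)) (W : 'M[R]_(r, n)) (U : {set 'I_m}) s
  (hU : #|U| = s) : \rank A = s -> nonneg_mx W ->
  (forall (i : 'I_n) (S : {set 'I_r}),
     lexfirst (admissible_col A (col i (A *m W))) S -> forall k, W k i != 0 -> k \in S) ->
  \rank (rows_of A U) = \rank A ->
  forall i, first [seq (B *m (\col_k (A *m W) (sel hU k) i))^T | B <- ensemble_A A hU]
            = Some (col i W)^T.
Proof.
move=> hs W0 stab rkU i.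
have [D hD] := rows_span rkU.
set v := col i (A *m W).
set w := col i W.
have hv : v = A *m w by rewrite /v /w !colE mulmxA.
have w0 : forall k, 0 <= w k 0 by move=> k; rewrite mxE.
have admw := adm_of_vec w0 (esym hv).
have [S0 lf] := exists_lexfirst admw.
have wS : forall k, k \notin S0 -> w k 0 = 0.
  move=> k kS; apply/eqP; apply: contraT => nz.
  by move: nz; rewrite mxE => /(stab i S0 lf k); rewrite (negbTE kS).
have suppw : [set k | w k 0 != 0] = S0.
  apply: (lexfirst_sub lf admw); apply/subsetP => k; rewrite inE.
  by apply: contraR => /wS ->; rewrite eqxx.
have indS0 := caratheodory lf.
have [X [subX [cX rX]]] := extend_indep indS0.
have cXs : #|X| == s by rewrite cX hs.
pose Xc : cset r s := exist _ X cXs.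
have suppz : supp w^T = S0 by rewrite -suppw; apply/setP => k; rewrite !inE mxE.
apply: first_eq.
- apply/mapP; exists (ensB A hU Xc).
    rewrite /ensemble_A; apply: map_f; rewrite mem_sort mem_enum /= inE /=.
    by rewrite rX cX hs.
  have rXc : \rank (cols_of A (val Xc)) == s by rewrite /= rX cX hs.
  have [xS Ax] := ensB_prop W hU hD rXc i.
  set x := _ *m _ in xS Ax *.
  apply/esym; congr trmx; apply/eqP; rewrite -subr_eq0; apply/eqP.
  apply: (indep_inj rX).
    move=> a aX; rewrite subE xS // wS ?subrr //.
    by apply: contra aX; apply: (subsetP subX).
  by rewrite mulmxBr Ax subrr.
- by move=> k; rewrite !mxE.
- move=> x /mapP [B /mapP [Y YL ->] ->] x0.
  have rY : \rank (cols_of A (val Y)) == s by move: YL; rewrite mem_sort mem_enum.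
  have [_ Ay] := ensB_prop W hU hD rY i.
  set y := ensB _ _ _ *m _ in Ay x0 *; rewrite -/w in Ay.
  have y0 : forall k, 0 <= y k 0 by move=> k; have := x0 k; rewrite mxE.
  have suppy : supp y^T = [set k | y k 0 != 0] by apply/setP => k; rewrite !inE mxE.
  rewrite suppz suppy; split.
    move=> e; congr trmx; apply/eqP; rewrite -subr_eq0; apply/eqP.
    apply: (indep_inj indS0).
      move=> a aS; rewrite subE wS //; rewrite -e inE negbK in aS.
      by rewrite (eqP aS) subr0.
    by rewrite mulmxBr Ay subrr.
  move=> ne; apply: lf.2; first by apply: adm_of_vec y0 _; rewrite Ay hv.
  by move=> e; move: ne; rewrite e eqxx.
Qed.


Lemma lexfirst_iff r (P Q : {set 'I_r} -> Prop) S :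
  (forall T, P T <-> Q T) -> lexfirst P S -> lexfirst Q S.
Proof. by move=> h [PS H]; split; [apply/h | move=> T /h; apply: H]. Qed.

Lemma ensW_tr r n (W : 'M[R]_(r, n)) (V : {set 'I_n}) t (hV : #|V| = t) :
  ensemble_W W hV = map trmx (ensemble_A W^T hV).
Proof.
rewrite /ensemble_W /ensemble_A -map_comp.
have -> : enum [pred X : cset r t | \rank (rows_of W (val X)) == t] =
          enum [pred X : cset r t | \rank (cols_of W^T (val X)) == t].
  apply: eq_enum => X; rewrite !inE.
  have -> : cols_of W^T (val X) = (rows_of W (val X))^T by apply/matrixP=> a b; rewrite !mxE.
  by rewrite mxrank_tr.
apply: eq_map => X /=.
rewrite /ensC /ensB /=.
set WTV := \matrix_(i, j) W (sel (cset_card X) i) (sel hV j).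
have -> : \matrix_(i, j) W^T (sel hV i) (sel (cset_card X) j) = WTV^T.
  by apply/matrixP=> a b; rewrite !mxE.
apply/matrixP=> a b; rewrite !mxE; apply: eq_bigr => j _.
by rewrite -trmx_inv !mxE mulrC.
Qed.

End LA.

Unset Implicit Arguments.

Theorem mainTheorem9 (R : realFieldType) (m n r : nat)
  (M : 'M[R]_(m, n)) (A : 'M[R]_(m, r)) (W : 'M[R]_(r, n))
  (U : {set 'I_m}) (V : {set 'I_n})
  (hU : #|U| = \rank A) (hV : #|V| = \rank W) :
  nonneg_mx M -> nonneg_mx A -> nonneg_mx W ->
  M = A *m W -> stable A W ->
  \rank (rows_of A U) = \rank A ->
  \rank (cols_of W V) = \rank W ->
  testP M hU hV (ensemble_A A hU) (ensemble_W W hV).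
Proof.
move=> _ A0 W0 -> [st1 st2] rkU rkV.
have CA := col_case hU (erefl _) W0 st1 rkU.
have A0' : nonneg_mx A^T by move=> a b; rewrite mxE.
have st2' : forall (i : 'I_m) (S : {set 'I_r}),
    lexfirst (admissible_col W^T (col i (W^T *m A^T))) S ->
    forall k, A^T k i != 0 -> k \in S.
  move=> j S lf k; rewrite mxE; apply: (st2 j S) => //.
  apply: lexfirst_iff lf => T; split.
  - case=> be [be0 e]; exists be; split => //; apply: trmx_inj.
    move: e; rewrite -trmx_mul -tr_row => ->.
    apply/matrixP=> a b; rewrite !mxE !summxE; apply: eq_bigr => k' _; by rewrite !mxE.
  - case=> be [be0 e]; exists be; split => //.
    rewrite -trmx_mul -tr_row e.
    apply/matrixP=> a b; rewrite !mxE !summxE; apply: eq_bigr => k' _; by rewrite !mxE.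
have rkV' : \rank (rows_of W^T V) = \rank W^T.
  have -> : rows_of W^T V = (cols_of W V)^T by apply/matrixP=> a b; rewrite !mxE.
  by rewrite !mxrank_tr.
have CW := col_case hV (mxrank_tr W) A0' st2' rkV'.
have CW' : forall j, first [seq (\row_k (A *m W) j (sel hV k)) *m C | C <- ensemble_W W hV]
    = Some (col j A^T)^T.
  move=> j; rewrite ensW_tr -map_comp -CW; congr first; apply: eq_map => B /=.
  rewrite trmx_mul; congr mulmx; apply/matrixP=> a b; rewrite !mxE.
  by apply: eq_bigr => k _; rewrite !mxE mulrC.
rewrite /testP /=; split; first by move=> i; rewrite CA.
split; first by move=> j; rewrite CW'.
move=> i j w a; rewrite CA CW' => -[<-] [<-].
by rewrite !mxE; apply: eq_bigr => k _; rewrite !mxE.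
Qed.
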